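(* Let $\mathfrak g$ be a finite-dimensional complex simple Lie algebra, $\lambda\in P^+$, and $\boldsymbol\lambda=(\lambda_1,\lambda_2),\boldsymbol\mu=(\mu_1,\mu_2)\in P^+(\lambda,2)$. Then $\boldsymbol\lambda\sim\boldsymbol\mu$ if and only if $\boldsymbol\mu\in\{(\lambda_1,\lambda_2),(\lambda_2,\lambda_1)\}$.
   Context: $\mathfrak g$ has positive roots $R^+$, coroots $h_\alpha$, dominant integral weights $P^+$. $P^+(\lambda,2)=\{(\lambda_1,\lambda_2)\in(P^+)^2:\lambda_1+\lambda_2=\lambda\}$; $(\lambda_1,\lambda_2)\sim(\mu_1,\mu_2)$ means $\min\{\lambda_1(h_\alpha),\lambda_2(h_\alpha)\}=\min\{\mu_1(h_\alpha),\mu_2(h_\alpha)\}$ for all $\alpha\in R^+$. *)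

(* Defs.v *)
From HB Require Import structures.
From mathcomp Require Import all_boot all_order all_algebra.
Set Implicit Arguments. Unset Strict Implicit. Unset Printing Implicit Defensive.
Import Order.TTheory GRing.Theory Num.Theory.
Local Open Scope ring_scope.

(* Finite-dimensional complex simple Lie algebras, up to isomorphism, are
   classified by their Cartan type. *)
Inductive cartan_type : Type :=
| TA of nat | TB of nat | TC of nat | TD of nat | TE of nat | TF4 | TG2.

Definition valid_type (t : cartan_type) : bool :=
  match t with
  | TA n => (1 <= n)%N
  | TB n => (2 <= n)%N
  | TC n => (2 <= n)%N
  | TD n => (4 <= n)%N
  | TE n => (6 <= n <= 8)%N
  | TF4 | TG2 => true
  end.

Definition rank (t : cartan_type) : nat :=
  match t with
  | TA n | TB n | TC n | TD n | TE n => n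
  | TF4 => 4%N
  | TG2 => 2%N
  end.

Definition edge (i j a b : nat) : bool :=
  ((i == a) && (j == b)) || ((i == b) && (j == a)).

Definition chain_adj (i j : nat) : bool := (i == j.+1) || (j == i.+1).

(* Cartan matrix (0-indexed), Kac convention: a_ij = alpha_j(h_i). *)
Definition cartan (t : cartan_type) (i j : nat) : int :=
  if i == j then 2 else
  match t with
  | TA n => if chain_adj i j then -1 else 0
  | TB n => if (i == n.-1) && (j == n.-2) then -2
            else if chain_adj i j then -1 else 0
  | TC n => if (i == n.-2) && (j == n.-1) then -2
            else if chain_adj i j then -1 else 0
  | TD n => if (chain_adj i j && (maxn i j <= n.-2)%N) || edge i j (n - 3)%N n.-1
            then -1 else 0
  | TE n => (* Bourbaki labelling 1..8 shifted to 0..7: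
               edges 1-3,3-4,4-5,5-6,6-7,7-8,2-4 *)
            if [|| edge i j 0 2, edge i j 1 3, edge i j 2 3, edge i j 3 4,
                   edge i j 4 5, edge i j 5 6 | edge i j 6 7]
            then -1 else 0
  | TF4 => if (i == 2%N) && (j == 1%N) then -2
           else if chain_adj i j then -1 else 0
  | TG2 => if (i == 0%N) && (j == 1%N) then -3
           else if chain_adj i j then -1 else 0
  end.

(* Elements of the Cartan subalgebra spanned (over Z) by the simple coroots
   h_0, ..., h_{r-1}, written in coordinates. *)
Definition hvec (t : cartan_type) := {ffun 'I_(rank t) -> int}.

Definition simple_coroot (t : cartan_type) (i : 'I_(rank t)) : hvec t :=
  [ffun j => ((i == j) : nat)%:Z].

(* alpha_i(h) for h = sum_k h_k h_k *)
Definition root_on (t : cartan_type) (i : 'I_(rank t)) (h : hvec t) : int :=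
  \sum_(k < rank t) h k * cartan t k i.

Definition sreflect (t : cartan_type) (i : 'I_(rank t)) (h : hvec t) : hvec t :=
  [ffun j => h j - root_on i h * ((i == j) : nat)%:Z].

(* The coroots h_alpha (alpha a root) form the Weyl-group orbit of the
   simple coroots. *)
Inductive is_coroot (t : cartan_type) : hvec t -> Prop :=
| coroot_simple (i : 'I_(rank t)) : is_coroot (simple_coroot i)
| coroot_reflect (i : 'I_(rank t)) (h : hvec t) :
    is_coroot h -> is_coroot (sreflect i h).

(* h_alpha for alpha in R^+: the coroots with nonnegative coordinates. *)
Definition pos_coroot (t : cartan_type) (h : hvec t) : Prop :=
  is_coroot h /\ forall j, 0 <= h j.

(* Dominant integral weights, in fundamental weight coordinates:
   lam i = lam(h_i). *)
Definition weight (t : cartan_type) := {ffun 'I_(rank t) -> nat}.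

Definition wpair (t : cartan_type) (lam : weight t) (h : hvec t) : int :=
  \sum_(j < rank t) h j * (lam j)%:Z.

Definition in_P2 (t : cartan_type) (lam l1 l2 : weight t) : Prop :=
  forall i, (l1 i + l2 i)%N = lam i.

Definition sim2 (t : cartan_type) (l1 l2 m1 m2 : weight t) : Prop :=
  forall h : hvec t, pos_coroot h ->
    Order.min (wpair l1 h) (wpair l2 h) = Order.min (wpair m1 h) (wpair m2 h).

(* Main.v *)
Require Import Defs.
From HB Require Import structures.
From mathcomp Require Import all_boot all_order all_algebra.
From mathcomp Require Import zify.
From Stdlib Require Import Classical.
Set Implicit Arguments. Unset Strict Implicit. Unset Printing Implicit Defensive.
Import Order.TTheory GRing.Theory Num.Theory.
Local Open Scope ring_scope.

Lemma sum_ind r (k0 : 'I_r) (f : 'I_r -> int) :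
  \sum_(j < r) ((k0 == j) : nat)%:Z * f j = f k0.
Proof.
rewrite (bigD1 k0) //= eqxx mul1r big1 ?addr0 // => j /negbTE.
by rewrite eq_sym => ->; rewrite mul0r.
Qed.

Section Path.
Variable t : cartan_type.
Variable k0 : 'I_(rank t).
Variable q : nat -> nat.
Definition pth (i : nat) : 'I_(rank t) := insubd k0 (q i).

Definition seg (a c : nat) : hvec t :=
  [ffun k => \sum_(a <= i < c) ((pth i == k) : nat)%:Z].

Lemma wpair_seg (l : weight t) a c :
  wpair l (seg a c) = \sum_(a <= i < c) (l (pth i))%:Z.
Proof.
rewrite /wpair.
under eq_bigr => j _ do rewrite ffunE mulr_suml.
rewrite exchange_big /=; apply: eq_bigr => i _.
by rewrite sum_ind.
Qed.

Lemma root_seg j a c :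
  root_on j (seg a c) = \sum_(a <= i < c) cartan t (pth i) j.
Proof.
rewrite /root_on.
under eq_bigr => k _ do rewrite ffunE mulr_suml.
rewrite exchange_big /=; apply: eq_bigr => i _.
rewrite -(sum_ind (pth i) (fun k : 'I_(rank t) => cartan t k j)).
by apply: eq_bigr => k _.
Qed.

Variable m : nat.
Hypothesis H1 : forall i, (i < m)%N -> (q i < rank t)%N.
Hypothesis H3 : forall b, (b.+1 < m)%N -> cartan t (q b) (q b.+1) = -1.
Hypothesis H4 : forall i b, (i < b)%N -> (b.+1 < m)%N -> cartan t (q i) (q b.+1) = 0.

Lemma pthE i : (i < m)%N -> val (pth i) = q i.
Proof. by move=> Hi; rewrite /pth val_insubd H1. Qed.

Lemma seg_coroot a c : (a < c <= m)%N -> is_coroot (seg a c).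
Proof.
elim: c => [|c IH]; first by [].
move=> /andP [Hac Hcm].
case: (ltnP a c) => Hac'.
  have -> : seg a c.+1 = sreflect (pth c) (seg a c).
    have Hr : root_on (pth c) (seg a c) = -1.
      rewrite root_seg.
      case: c IH Hac Hcm Hac' => [|b] IH Hac Hcm Hac'; first by [].
      rewrite big_nat_recr //= big1_seq ?add0r.
        rewrite !pthE; try lia; apply: H3; lia.
      move=> i /andP [_]; rewrite mem_iota => /andP [Hai Hib].
      rewrite !pthE; try lia; apply: H4; lia.
    apply/ffunP => k; rewrite !ffunE Hr big_nat_recr /=; last lia.
    by rewrite mulN1r opprK.
  apply: coroot_reflect; apply: IH; lia.
have -> : c = a by lia.
have -> : seg a a.+1 = simple_coroot (pth a).
  by apply/ffunP => k; rewrite !ffunE big_nat1.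
by apply: coroot_simple.
Qed.

Lemma seg_pos a c : (a < c <= m)%N -> pos_coroot (seg a c).
Proof.
move=> H; split; first exact: seg_coroot.
move=> j; rewrite ffunE; apply: sumr_ge0 => i _; by [].
Qed.

End Path.

Lemma line (m : nat) (D E : nat -> int) : D 0%N = 0 -> E 0%N = 0 ->
  (forall x y, (x <= m)%N -> (y <= m)%N -> `|D x - D y| = `|E x - E y|) ->
  exists s : int, (s = 1 \/ s = -1) /\ forall x, (x <= m)%N -> E x = s * D x.
Proof.
move=> D0 E0 H.
have Habs x : (x <= m)%N -> `|D x| = `|E x|.
  by move=> Hx; have := H x 0%N Hx isT; rewrite D0 E0 !subr0.
case: (classic (exists c, (c <= m)%N /\ D c <> 0)) => [[c [Hc Dc]]|Hn].
  have := Habs c Hc => Hac.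
  have [s [Hs Ec]] : exists s : int, (s = 1 \/ s = -1) /\ E c = s * D c.
    have : E c = D c \/ E c = - D c by lia.
    case=> ->; [exists 1 | exists (-1)]; split; (by left) || (by right) || by rewrite ?mul1r ?mulN1r.
  exists s; split => // x Hx.
  have A1 := Habs x Hx.
  have A2 := H x c Hx Hc.
  rewrite Ec in A2.
  case: Hs => Hs; subst s; rewrite ?mul1r ?mulN1r in Ec A2 *; nia.
exists 1; split; first by left.
move=> x Hx; have A := Habs x Hx.
have : D x = 0 by apply: NNPP => Hd; apply: Hn; exists x.
lia.
Qed.

Lemma wpair_add t (lam l1 l2 : weight t) h : in_P2 lam l1 l2 ->
  wpair l1 h + wpair l2 h = wpair lam h.
Proof.
move=> H; rewrite /wpair -big_split /=; apply: eq_bigr => j _.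
by rewrite -mulrDr -H PoszD.
Qed.

Lemma sim_abs t (lam l1 l2 m1 m2 : weight t) h :
  in_P2 lam l1 l2 -> in_P2 lam m1 m2 -> sim2 l1 l2 m1 m2 -> pos_coroot h ->
  `|wpair l1 h - wpair l2 h| = `|wpair m1 h - wpair m2 h|.
Proof.
move=> Hl Hm Hs Hh; have := Hs h Hh.
have := wpair_add h Hl; have := wpair_add h Hm. lia.
Qed.

Lemma path_sign t (lam l1 l2 m1 m2 : weight t) (k0 : 'I_(rank t)) (m : nat)
  (q : nat -> nat) :
  in_P2 lam l1 l2 -> in_P2 lam m1 m2 -> sim2 l1 l2 m1 m2 ->
  (forall i, (i < m)%N -> (q i < rank t)%N) ->
  (forall b, (b.+1 < m)%N -> cartan t (q b) (q b.+1) = -1) ->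
  (forall i b, (i < b)%N -> (b.+1 < m)%N -> cartan t (q i) (q b.+1) = 0) ->
  exists s : int, (s = 1 \/ s = -1) /\ forall i, (i < m)%N ->
    forall k : 'I_(rank t), val k = q i ->
    (m1 k)%:Z - (m2 k)%:Z = s * ((l1 k)%:Z - (l2 k)%:Z).
Proof.
move=> Hl Hm Hs H1 H3 H4.
pose Dp x := \sum_(0 <= i < x) ((l1 (pth k0 q i))%:Z - (l2 (pth k0 q i))%:Z).
pose Ep x := \sum_(0 <= i < x) ((m1 (pth k0 q i))%:Z - (m2 (pth k0 q i))%:Z).
have Hseg x y : (x < y <= m)%N -> `|Dp y - Dp x| = `|Ep y - Ep x|.
  move=> Hxy.
  have := sim_abs Hl Hm Hs (@seg_pos t k0 q m H1 H3 H4 x y Hxy).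
  rewrite !wpair_seg -!sumrB /Dp /Ep.
  have Hxy' : (x <= y)%N by lia.
  rewrite (big_cat_nat (leq0n x) Hxy').
  rewrite [X in _ = `|X - _|](big_cat_nat (leq0n x) Hxy').
  move=> H /=; rewrite [X in _ = `|X - _|]addrC addrK addrC addrK; exact: H.
have [s [Hs1 Hsx]] : exists s : int, (s = 1 \/ s = -1) /\
    forall x, (x <= m)%N -> Ep x = s * Dp x.
  apply: line; rewrite /Dp /Ep ?big_geq //.
  move=> x y Hx Hy.
  case: (ltngtP x y) => Hxy.
  - by rewrite distrC [in RHS]distrC; apply: Hseg; lia.
  - by apply: Hseg; lia.
  - by rewrite Hxy !subrr.
exists s; split => // i Hi k Hk.
have -> : k = pth k0 q i by apply: val_inj; rewrite /= (pthE k0 H1 Hi).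
have E1 := Hsx i.+1 Hi; have E0 := Hsx i (ltnW Hi).
rewrite /Ep /Dp !big_nat_recr //= in E1.
rewrite -/(Ep i) -/(Dp i) E0 mulrDr in E1.
by move/addrI: E1.
Qed.

Ltac crush := rewrite /cartan /chain_adj /edge /=;
  repeat (match goal with
  | |- context [(?a <= ?b)%N] => case: (leqP a b) => ?
  | |- context [(?a == ?b)%N] => case: (@eqP nat a b) => ?
  end; simpl); try lia.

Lemma A3 n b : (b.+1 < n)%N -> cartan (TA n) b b.+1 = -1.
Proof. move=> H; crush. Qed.
Lemma A4 n i b : (i < b)%N -> (b.+1 < n)%N -> cartan (TA n) i b.+1 = 0.
Proof. move=> H H'; crush. Qed.
Lemma B3 n b : (b.+1 < n)%N -> cartan (TB n) b b.+1 = -1.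
Proof. move=> H; crush. Qed.
Lemma B4 n i b : (i < b)%N -> (b.+1 < n)%N -> cartan (TB n) i b.+1 = 0.
Proof. move=> H H'; crush. Qed.
Lemma C3 n b : (b.+1 < n)%N -> cartan (TC n) (n.-1 - b) (n.-1 - b.+1) = -1.
Proof. move=> H; crush. Qed.
Lemma C4 n i b : (i < b)%N -> (b.+1 < n)%N -> cartan (TC n) (n.-1 - i) (n.-1 - b.+1) = 0.
Proof. move=> H H'; crush. Qed.

Definition qD2 n i := if (i < n - 2)%N then i else n.-1.
Definition qD3 n i := if i == 0%N then (n - 2)%N else if i == 1%N then (n-3)%N else n.-1.
Definition qE1 i := if i == 0%N then 0%N else i.+1.
Definition qE2 i := if i == 0%N then 1%N else i.+2.
Definition qE3 i := if i == 0%N then 0%N else if i == 1%N then 2%N else if i == 2%N then 3%N else 1%N.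

Lemma D13 n b : (4 <= n)%N -> (b.+1 < n.-1)%N -> cartan (TD n) b b.+1 = -1.
Proof. move=> ? H; crush. Qed.
Lemma D14 n i b : (4 <= n)%N -> (i < b)%N -> (b.+1 < n.-1)%N -> cartan (TD n) i b.+1 = 0.
Proof. move=> ? H H'; crush. Qed.
Lemma D23 n b : (4 <= n)%N -> (b.+1 < n.-1)%N -> cartan (TD n) (qD2 n b) (qD2 n b.+1) = -1.
Proof. rewrite /qD2 => ? H; crush. Qed.
Lemma D24 n i b : (4 <= n)%N -> (i < b)%N -> (b.+1 < n.-1)%N -> cartan (TD n) (qD2 n i) (qD2 n b.+1) = 0.
Proof. rewrite /qD2 => ? H H'; crush. Qed.
Lemma D33 n b : (4 <= n)%N -> (b.+1 < 3)%N -> cartan (TD n) (qD3 n b) (qD3 n b.+1) = -1.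
Proof. rewrite /qD3 => ? H; have : (b = 0 \/ b = 1)%N by lia. by case=> ->; crush. Qed.
Lemma D34 n i b : (4 <= n)%N -> (i < b)%N -> (b.+1 < 3)%N -> cartan (TD n) (qD3 n i) (qD3 n b.+1) = 0.
Proof. rewrite /qD3 => ? H H'; have [-> ->] : (i = 0 /\ b = 1)%N by lia. crush. Qed.
Lemma E13 n b : (6 <= n <= 8)%N -> (b.+1 < n.-1)%N -> cartan (TE n) (qE1 b) (qE1 b.+1) = -1.
Proof. rewrite /qE1 => /andP[? ?] H; case: b H => [|b] H /=; crush. Qed.
Lemma E14 n i b : (6 <= n <= 8)%N -> (i < b)%N -> (b.+1 < n.-1)%N -> cartan (TE n) (qE1 i) (qE1 b.+1) = 0.
Proof. rewrite /qE1 => /andP[? ?] H H'; case: i H => [|i] H /=; crush. Qed.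
Lemma E23 n b : (6 <= n <= 8)%N -> (b.+1 < n - 2)%N -> cartan (TE n) (qE2 b) (qE2 b.+1) = -1.
Proof. rewrite /qE2 => /andP[? ?] H; case: b H => [|b] H /=; crush. Qed.
Lemma E24 n i b : (6 <= n <= 8)%N -> (i < b)%N -> (b.+1 < n - 2)%N -> cartan (TE n) (qE2 i) (qE2 b.+1) = 0.
Proof. rewrite /qE2 => /andP[? ?] H H'; case: i H => [|i] H /=; crush. Qed.
Lemma E33 n b : (6 <= n <= 8)%N -> (b.+1 < 4)%N -> cartan (TE n) (qE3 b) (qE3 b.+1) = -1.
Proof. rewrite /qE3 => /andP[? ?] H; have : (b = 0 \/ b = 1 \/ b = 2)%N by lia. by case=> [->|[->|->]]; crush. Qed.
Lemma E34 n i b : (6 <= n <= 8)%N -> (i < b)%N -> (b.+1 < 4)%N -> cartan (TE n) (qE3 i) (qE3 b.+1) = 0.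
Proof. rewrite /qE3 => /andP[? ?] H H'; have : (i = 0 /\ b = 1 \/ i = 0 /\ b = 2 \/ i = 1 /\ b = 2)%N by lia. by case=> [[-> ->]|[[-> ->]|[-> ->]]]; crush. Qed.
Lemma F3 b : (b.+1 < 4)%N -> cartan TF4 b b.+1 = -1.
Proof. move=> H; crush. Qed.
Lemma F4 i b : (i < b)%N -> (b.+1 < 4)%N -> cartan TF4 i b.+1 = 0.
Proof. move=> H H'; crush. Qed.
Lemma G3 b : (b.+1 < 2)%N -> cartan TG2 (1 - b) (1 - b.+1) = -1.
Proof. move=> H; crush. Qed.
Lemma G4 i b : (i < b)%N -> (b.+1 < 2)%N -> cartan TG2 (1 - i) (1 - b.+1) = 0.
Proof. move=> H H'; crush. Qed.

Lemma finish t (lam l1 l2 m1 m2 : weight t) :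
  in_P2 lam l1 l2 -> in_P2 lam m1 m2 ->
  (exists s : int, (s = 1 \/ s = -1) /\ forall k,
     (m1 k)%:Z - (m2 k)%:Z = s * ((l1 k)%:Z - (l2 k)%:Z)) ->
  (m1, m2) = (l1, l2) \/ (m1, m2) = (l2, l1).
Proof.
move=> Hl Hm [s [[->|->] Hs]]; [left|right];
  (congr pair; apply/ffunP => k; have := Hs k; have := Hl k; have := Hm k;
   move: (m1 k) (m2 k) (l1 k) (l2 k) (lam k) => a b c d e; lia).
Qed.

Definition onp (m : nat) (q : nat -> nat) (k : nat) := exists i, (i < m)%N /\ q i = k.

Lemma path_sign' t (lam l1 l2 m1 m2 : weight t) (k0 : 'I_(rank t)) (m : nat)
  (q : nat -> nat) :
  in_P2 lam l1 l2 -> in_P2 lam m1 m2 -> sim2 l1 l2 m1 m2 ->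
  (forall i, (i < m)%N -> (q i < rank t)%N) ->
  (forall b, (b.+1 < m)%N -> cartan t (q b) (q b.+1) = -1) ->
  (forall i b, (i < b)%N -> (b.+1 < m)%N -> cartan t (q i) (q b.+1) = 0) ->
  exists s : int, (s = 1 \/ s = -1) /\ forall k : 'I_(rank t), onp m q k ->
    (m1 k)%:Z - (m2 k)%:Z = s * ((l1 k)%:Z - (l2 k)%:Z).
Proof.
move=> Hl Hm Hs H1 H3 H4.
have [s [Hs1 Hs2]] := path_sign k0 Hl Hm Hs H1 H3 H4.
exists s; split => // k [i [Hi Hk]]; exact: Hs2 i Hi k (esym Hk).
Qed.

Lemma chain t (lam l1 l2 m1 m2 : weight t) (k0 : 'I_(rank t)) (m : nat)
  (q : nat -> nat) :
  in_P2 lam l1 l2 -> in_P2 lam m1 m2 -> sim2 l1 l2 m1 m2 ->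
  (forall i, (i < m)%N -> (q i < rank t)%N) ->
  (forall b, (b.+1 < m)%N -> cartan t (q b) (q b.+1) = -1) ->
  (forall i b, (i < b)%N -> (b.+1 < m)%N -> cartan t (q i) (q b.+1) = 0) ->
  (forall k : 'I_(rank t), onp m q k) ->
  (m1, m2) = (l1, l2) \/ (m1, m2) = (l2, l1).
Proof.
move=> Hl Hm Hs H1 H3 H4 Hc.
have [s [Hs1 Hs2]] := path_sign' k0 Hl Hm Hs H1 H3 H4.
apply: (finish Hl Hm); exists s; split => // k; exact: Hs2 k (Hc k).
Qed.

Lemma three t (lam l1 l2 m1 m2 : weight t) (k0 : 'I_(rank t))
  (ma mb mc : nat) (qa qb qc : nat -> nat) (core : nat -> Prop) :
  in_P2 lam l1 l2 -> in_P2 lam m1 m2 -> sim2 l1 l2 m1 m2 ->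
  (forall i, (i < ma)%N -> (qa i < rank t)%N) ->
  (forall b, (b.+1 < ma)%N -> cartan t (qa b) (qa b.+1) = -1) ->
  (forall i b, (i < b)%N -> (b.+1 < ma)%N -> cartan t (qa i) (qa b.+1) = 0) ->
  (forall i, (i < mb)%N -> (qb i < rank t)%N) ->
  (forall b, (b.+1 < mb)%N -> cartan t (qb b) (qb b.+1) = -1) ->
  (forall i b, (i < b)%N -> (b.+1 < mb)%N -> cartan t (qb i) (qb b.+1) = 0) ->
  (forall i, (i < mc)%N -> (qc i < rank t)%N) ->
  (forall b, (b.+1 < mc)%N -> cartan t (qc b) (qc b.+1) = -1) ->
  (forall i b, (i < b)%N -> (b.+1 < mc)%N -> cartan t (qc i) (qc b.+1) = 0) ->
  (forall k : nat, (k < rank t)%N -> core k -> onp ma qa k /\ onp mb qb k) ->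
  (forall k : nat, (k < rank t)%N -> onp ma qa k \/ onp mb qb k) ->
  (forall k : nat, (k < rank t)%N -> core k \/ onp mc qc k) ->
  (m1, m2) = (l1, l2) \/ (m1, m2) = (l2, l1).
Proof.
move=> Hl Hm Hs A1 A3 A4 B1 B3 B4 C1 C3 C4 Hcore Hab Hcc.
have [sa [Ha1 Ha2]] := path_sign' k0 Hl Hm Hs A1 A3 A4.
have [sb [Hb1 Hb2]] := path_sign' k0 Hl Hm Hs B1 B3 B4.
have [sc [Hc1 Hc2]] := path_sign' k0 Hl Hm Hs C1 C3 C4.
apply: (finish Hl Hm).
case: (classic (exists k : 'I_(rank t), core k /\ (l1 k)%:Z - (l2 k)%:Z <> 0)).
  move=> [k [Hk Hd]].
  have [Pa Pb] := Hcore k (ltn_ord k) Hk.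
  have Eab : sa = sb.
    have := Ha2 k Pa; rewrite (Hb2 k Pb) => E.
    by apply: (mulIf (x := (l1 k)%:Z - (l2 k)%:Z)); [apply/eqP|].
  exists sa; split => // k'.
  case: (Hab k' (ltn_ord k')) => P; first exact: Ha2.
  by rewrite Eab; apply: Hb2.
move=> Hn.
exists sc; split => // k.
case: (Hcc k (ltn_ord k)) => P; last exact: Hc2.
have Hd : (l1 k)%:Z - (l2 k)%:Z = 0.
  by apply: NNPP => Hd; apply: Hn; exists k.
have [Pa _] := Hcore k (ltn_ord k) P.
by rewrite (Ha2 k Pa) Hd !mulr0.
Qed.

Ltac crush2 := try rewrite /qD2; try rewrite /qD3; try rewrite /qE1; try rewrite /qE2; try rewrite /qE3;
  repeat (case: ifP => /= ?); try lia.

Theorem lemma5p5 (t : cartan_type) (ht : valid_type t)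
  (lam l1 l2 m1 m2 : weight t) :
  in_P2 lam l1 l2 -> in_P2 lam m1 m2 ->
  (sim2 l1 l2 m1 m2 <-> ((m1, m2) = (l1, l2) \/ (m1, m2) = (l2, l1))).
Proof.
move=> Hl Hm; split; last first.
  case=> [[-> ->]|[-> ->]] h _ //.
  by rewrite minC.
move=> Hs.
have Hr : (0 < rank t)%N by case: t ht {lam l1 l2 m1 m2 Hl Hm Hs} => //= n; lia.
have [k0 _] : exists k0 : 'I_(rank t), True by exists (Ordinal Hr).
case: t ht lam l1 l2 m1 m2 Hl Hm Hs Hr k0 => [n|n|n|n|n| |] ht lam l1 l2 m1 m2 Hl Hm Hs Hr k0; move: ht => /= ht.
- apply: (chain (m := n) (q := fun i => i) k0 Hl Hm Hs) => //.
  + exact: A3.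
  + exact: A4.
  + by move=> k; exists k.
- apply: (chain (m := n) (q := fun i => i) k0 Hl Hm Hs) => //.
  + exact: B3.
  + exact: B4.
  + by move=> k; exists k.
- apply: (chain (m := n) (q := fun i => (n.-1 - i)%N) k0 Hl Hm Hs).
  + move=> i Hi /=; lia.
  + exact: C3.
  + exact: C4.
  + move=> k; exists (n.-1 - k)%N; split; have := ltn_ord k; rewrite /=; lia.
- apply: (three (ma := n.-1) (qa := fun i => i) (mb := n.-1) (qb := qD2 n)
     (mc := 3) (qc := qD3 n) (core := fun k => (k < n - 2)%N) k0 Hl Hm Hs).
  + move=> i Hi /=; lia.
  + by move=> *; apply: D13 => //; lia.
  + by move=> *; apply: D14 => //; lia.
  + move=> i Hi /=; crush2.
  + by move=> *; apply: D23 => //; lia.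
  + by move=> *; apply: D24 => //; lia.
  + move=> i Hi /=; crush2.
  + by move=> *; apply: D33 => //; lia.
  + by move=> *; apply: D34 => //; lia.
  + move=> k /= Hk Hc; split; exists k; split; crush2.
  + move=> k /= Hk; case: (ltnP k n.-1) => Hk'.
      by left; exists k.
    right; exists (n - 2)%N; split; crush2.
  + move=> k /= Hk; case: (ltnP k (n - 2)) => Hk'; first by left.
    right; case: (leqP k (n - 2)) => Hk2.
      exists 0%N; split; first by []. rewrite /qD3 /=. lia.
    exists 2%N; split; first by []. rewrite /qD3 /=. lia.
- apply: (three (ma := n.-1) (qa := qE1) (mb := n - 2) (qb := qE2)
     (mc := 4) (qc := qE3) (core := fun k => (3 <= k)%N) k0 Hl Hm Hs).
  + move=> i Hi /=; crush2.
  + by move=> *; apply: E13 => //; lia.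
  + by move=> *; apply: E14 => //; lia.
  + move=> i Hi /=; crush2.
  + by move=> *; apply: E23 => //; lia.
  + by move=> *; apply: E24 => //; lia.
  + move=> i Hi /=; crush2.
  + by move=> *; apply: E33 => //; lia.
  + by move=> *; apply: E34 => //; lia.
  + move=> k /= Hk Hc; split; [exists k.-1 | exists k.-2]; split; crush2.
  + move=> k /= Hk.
    have : (k = 0 \/ k = 1 \/ k = 2 \/ 3 <= k)%N by lia.
    case=> [->|[->|[->|H3]]].
    * by left; exists 0%N; split; crush2.
    * by right; exists 0%N; split; crush2.
    * by left; exists 1%N; split; crush2.
    * by left; exists k.-1; split; crush2.
  + move=> k /= Hk.
    have : (k = 0 \/ k = 1 \/ k = 2 \/ 3 <= k)%N by lia.
    case=> [->|[->|[->|H3]]]; [right|right|right|by left].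
    * by exists 0%N; split; crush2.
    * by exists 3%N; split; crush2.
    * by exists 1%N; split; crush2.
- apply: (chain (m := 4) (q := fun i => i) k0 Hl Hm Hs) => //.
  + exact: F3.
  + exact: F4.
  + by move=> k; exists k.
- apply: (chain (m := 2) (q := fun i => (1 - i)%N) k0 Hl Hm Hs).
  + move=> i Hi /=; lia.
  + exact: G3.
  + exact: G4.
  + move=> k; exists (1 - k)%N; split; have := ltn_ord k; rewrite /=; lia.
Qed.
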